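(* Let $\mathcal{C}$ be an arbitrary linear code of length $n$. For each $i = 1,2,\ldots,d(\mathcal{C})-1$, define $$w_i = \max\left\{\left\lceil \frac{n+1}{i}\right\rceil - 1,\ d(\mathcal{C}^\perp)\right\}.$$ Then $$\rho(\mathcal{C}) \ge \binom{n}{i} \Big/ \left( w_i \binom{n-w_i}{i-1}\right) \quad \text{for } i = 1,2,\ldots,d(\mathcal{C})-1.$$
   Context: A parity-check matrix for a linear code $\mathcal{C}$ (over a finite field) is any matrix (possibly with linearly dependent rows) whose rows span the dual code $\mathcal{C}^\perp$. $d(\mathcal{C})$ and $d(\mathcal{C}^\perp)$ denote the minimum Hamming distances of $\mathcal{C}$ and $\mathcal{C}^\perp$. For a parity-check matrix $H$, the stopping distance $s(H)$ is the largest integer such that for every set of $s(H)-1$ or fewer columns of $H$, the projection of $H$ onto those columns contains at least one row of Hamming weight exactly one. The stopping redundancy $\rho(\mathcal{C})$ is the smallest number of rows of a parity-check matrix $H$ for $\mathcal{C}$ with $s(H) = d(\mathcal{C})$. *)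

(* Defs.v *)
(* Linear codes over a finite field F, of length n, are
   represented as row spaces of matrices (mxalgebra). *)
From HB Require Import structures.
From mathcomp Require Import all_boot all_order all_algebra.
Set Implicit Arguments. Unset Strict Implicit. Unset Printing Implicit Defensive.
Import Order.TTheory GRing.Theory Num.Theory.
Local Open Scope ring_scope.

Section Codes.
Variables (F : finFieldType) (n : nat).

Definition wt (v : 'rV[F]_n) : nat := #|[set j : 'I_n | v 0 j != 0]|.

Definition in_code k (C : 'M[F]_(k, n)) (v : 'rV[F]_n) : bool := (v <= C)%MS.

Definition in_dual k (C : 'M[F]_(k, n)) (v : 'rV[F]_n) : bool :=
  [forall c : 'rV[F]_n, (c <= C)%MS ==> (\sum_(j < n) v 0 j * c 0 j == 0)].

(* minimum Hamming distance (= minimum weight of a nonzero word) of the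
   linear code whose membership predicate is P; the zero code gets n.+1
   by convention (it is never used in that case). *)
Definition min_dist (P : pred 'rV[F]_n) : nat :=
  \big[minn/n.+1]_(v : 'rV[F]_n | P v && (v != 0)) wt v.

(* H is a parity-check matrix for C: its rows span the dual code
   (rows may be linearly dependent). *)
Definition is_parity_check k m (C : 'M[F]_(k, n)) (H : 'M[F]_(m, n)) : Prop :=
  forall v : 'rV[F]_n, (v <= H)%MS = in_dual C v.

Definition has_weight_one_row m (H : 'M[F]_(m, n)) (S : {set 'I_n}) : bool :=
  [exists r : 'I_m, #|[set j in S | H r j != 0]| == 1].

Definition stop_prop m (H : 'M[F]_(m, n)) (s : nat) : Prop :=
  forall S : {set 'I_n}, S != set0 -> (#|S| < s)%N -> has_weight_one_row H S.

(* s(H) = s : s is the largest integer with stop_prop H s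
   (stop_prop H is downward closed in s). *)
Definition stopping_distance_is m (H : 'M[F]_(m, n)) (s : nat) : Prop :=
  stop_prop H s /\ ~ stop_prop H s.+1.

Definition ceil_div (a b : nat) : nat := ((a + b - 1) %/ b)%N.

End Codes.

(* Main.v *)
Require Import Defs.
From HB Require Import structures.
From mathcomp Require Import all_boot all_order all_algebra.
From mathcomp Require Import zify.
Import Order.TTheory GRing.Theory Num.Theory.
Set Implicit Arguments. Unset Strict Implicit.

Lemma step_dec n i t : (0 < i -> t < n -> n < t.+1 * i ->
  t.+1 * 'C(n - t.+1, i.-1) <= t * 'C(n - t, i.-1))%N.
Proof.
move=> i0 tn ni.
have rel := mul_bin_down (n - t) i.-1.
have e : ((n - t).-1 = n - t.+1)%N by lia.
rewrite e in rel.
have hpos : (0 < n - t)%N by lia.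
have core : (t.+1 * (n - t - i.-1) <= (n - t) * t)%N by nia.
rewrite -(leq_pmul2l hpos) mulnCA rel mulnA [X in (_ <= X)%N]mulnA.
exact: leq_mul.
Qed.

Lemma step_inc n i t : (0 < i -> t.+1 * i <= n ->
  t * 'C(n - t, i.-1) <= t.+1 * 'C(n - t.+1, i.-1))%N.
Proof.
move=> i0 ni.
have rel := mul_bin_down (n - t) i.-1.
have e : ((n - t).-1 = n - t.+1)%N by lia.
rewrite e in rel.
have ti : (t <= t * i)%N by rewrite leq_pmulr.
have hpos : (0 < n - t - i.-1)%N by nia.
have core : ((n - t) * t <= t.+1 * (n - t - i.-1))%N by nia.
rewrite -(leq_pmul2l hpos) mulnCA -rel mulnA [X in (_ <= X)%N]mulnCA [X in (_ <= X)%N]mulnA.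
rewrite [t * (n - t)]mulnC; exact: leq_mul.
Qed.

Lemma dec_chain n i a b : (0 < i -> n %/ i <= a -> a <= b -> b <= n ->
  b * 'C(n - b, i.-1) <= a * 'C(n - a, i.-1))%N.
Proof.
move=> i0 ha; elim: b => [|b IH]; first by rewrite leqn0 => /eqP ->.
rewrite leq_eqVlt => /orP[/eqP <- //| ab] bn.
apply: leq_trans (IH ab (ltnW bn)).
apply: step_dec => //.
have := ltn_ceil n i0. nia.
Qed.

Lemma inc_chain n i a b : (0 < i -> a <= b -> b <= n %/ i ->
  a * 'C(n - a, i.-1) <= b * 'C(n - b, i.-1))%N.
Proof.
move=> i0 ab; elim: b ab => [|b IH]; first by rewrite leqn0 => /eqP ->.
rewrite leq_eqVlt => /orP[/eqP -> //| ab] bn.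
apply: leq_trans (IH ab (ltnW bn)) _.
apply: step_inc => //.
rewrite -leq_divRL //.
Qed.

Lemma f_le n i dd t : (0 < i -> t <= n -> (t = 0 \/ dd <= t) ->
  t * 'C(n - t, i.-1) <= maxn (n %/ i) dd * 'C(n - maxn (n %/ i) dd, i.-1))%N.
Proof.
move=> i0 tn [-> //|dt].
have [dl|dl] := leqP dd (n %/ i).
  idtac.
  have [tl|tl] := leqP t (n %/ i); first exact: inc_chain.
  by apply: dec_chain => //; exact: ltnW.
idtac.
by apply: dec_chain => //; exact: ltnW.
Qed.

Lemma count_one (T : finType) (A : {set T}) i : (0 < i ->
  #|[set S : {set T} | (#|S| == i) && (#|S :&: A| == 1)]| <= #|A| * 'C(#|T| - #|A|, i.-1))%N.
Proof.
move=> i0.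
set X := [set S : {set T} | _].
pose g := fun S : {set T} => (S :&: A, S :\: A).
have ginj : injective g.
  move=> S1 S2 [e1 e2]; by rewrite -(setID S1 A) -(setID S2 A) e1 e2.
rewrite -(card_imset X ginj).
have sub : g @: X \subset setX [set P : {set T} | P \subset A & #|P| == 1]
                         [set B : {set T} | B \subset ~: A & #|B| == i.-1].
  apply/subsetP => y /imsetP[S]; rewrite inE => /andP[/eqP hS /eqP h1] ->.
  rewrite !inE subsetIr h1 /=.
  have := cardsID A S; rewrite h1 hS => e.
  apply/andP; split.
    by apply/subsetP => x; rewrite !inE => /andP[].
  apply/eqP; lia.
apply: leq_trans (subset_leq_card sub) _.
rewrite cardsX !cards_draws bin1 -[#|~: A|](addKn #|A|) cardsC.
by [].
Qed.

Lemma card_bigcup_le (T : finType) m (X : 'I_m -> {set T}) :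
  (#|\bigcup_(r < m) X r| <= \sum_(r < m) #|X r|)%N.
Proof.
elim: m X => [|m IH] X; first by rewrite big_ord0 cards0.
rewrite big_ord_recr /= big_ord_recr /=.
apply: leq_trans (leq_card_setU _ _).1 _.
by rewrite leq_add2r IH.
Qed.
Lemma bigmin_le (I : eqType) (r : seq I) (P : pred I) (f : I -> nat) z c :
  z \in r -> P z -> (\big[minn/c]_(v <- r | P v) f v <= f z)%N.
Proof.
elim: r => // a r IH; rewrite inE big_cons => /predU1P[<-|zr] Pz.
  by rewrite Pz geq_minl.
case: (P a); last exact: IH.
by apply: leq_trans (geq_minr _ _) _; exact: IH.
Qed.

Local Open Scope ring_scope.

Theorem theorem5 (F : finFieldType) (n k : nat) (C : 'M[F]_(k, n)) :
  C != 0 ->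
  forall i : nat, (1 <= i)%N -> (i <= min_dist (in_code C) - 1)%N ->
  let w := maxn (ceil_div n.+1 i - 1) (min_dist (in_dual C)) in
  forall (m : nat) (H : 'M[F]_(m, n)),
    is_parity_check C H ->
    stopping_distance_is H (min_dist (in_code C)) ->
    ('C(n, i)%:R / (w%:R * 'C(n - w, i.-1)%:R) : rat) <= m%:R.
Proof.
move=> C0 i i1 hi w m H hH [hstop _].
have hw : w = maxn (n %/ i) (min_dist (in_dual C)).
  rewrite /w /ceil_div; congr maxn.
  have -> : (n.+1 + i - 1 = 1 * i + n)%N by lia.
  by rewrite divnMDl // add1n subn1.
pose A r := [set j : 'I_n | H r j != 0].
have key r : (#|[set S : {set 'I_n} | (#|S| == i) && (#|S :&: A r| == 1)]|
               <= w * 'C(n - w, i.-1))%N.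
  apply: leq_trans (count_one _ i1) _.
  rewrite card_ord hw; apply: f_le => //.
    by rewrite -[n in (_ <= n)%N]card_ord max_card.
  have [->|pos] := posnP #|A r|; [by left | right].
  have [j hj] := card_gt0P pos.
  have rowd : in_dual C (row r H) by rewrite -hH row_sub.
  have rnz : row r H != 0.
    apply/eqP => e; move: hj; rewrite inE.
    have : row r H 0 j = H r j by rewrite mxE.
    by rewrite e mxE => <-; rewrite eqxx.
  rewrite /min_dist.
  apply: leq_trans (@bigmin_le _ _ (fun v => in_dual C v && (v != 0)) (@wt F n) (row r H) _ (mem_index_enum _) _) _.
    by rewrite /= rowd rnz.
  rewrite /wt; apply: eq_leq; apply: eq_card => x; rewrite !inE mxE.
  by [].
have cover : [set S : {set 'I_n} | #|S| == i] \subset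
   \bigcup_(r < m) [set S : {set 'I_n} | (#|S| == i) && (#|S :&: A r| == 1)].
  apply/subsetP => S; rewrite inE => /eqP hS.
  have : has_weight_one_row H S.
    apply: hstop.
      by apply/eqP => e; move: hS; rewrite e cards0; lia.
    lia.
  case/existsP => r hr; apply/bigcupP; exists r => //.
  rewrite inE hS eqxx /=.
  rewrite (_ : S :&: _ = [set j in S | H r j != 0]) //.
  by apply/setP => x; rewrite !inE.
have hC : ('C(n, i) <= m * (w * 'C(n - w, i.-1)))%N.
  rewrite -{1}[n]card_ord -card_draws.
  apply: leq_trans (subset_leq_card cover) _.
  apply: leq_trans (card_bigcup_le _) _.
  apply: (@leq_trans (\sum_(r < m) (w * 'C(n - w, i.-1)))%N).
    by apply: leq_sum => r _; exact: key.
  by rewrite big_const_ord iter_addn_0 mulnC.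
rewrite -natrM.
have [D0|Dpos] := posnP (w * 'C(n - w, i.-1))%N.
  by rewrite D0 invr0 mulr0 ler0n.
by rewrite ler_pdivrMr ?ltr0n // -natrM ler_nat.
Qed.
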